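(* Let $G_{K,N}$ be the graph with vertex set $\{u_{ij},b_{ij}: i\in[K], j\in[N]\}$ whose edges are exactly: $u_{ij}\sim u_{ik}$ for $j\ne k$; $b_{ij}\sim u_{ik}$ for all $j,k\in[N]$; and for each $i\in[N]$ and $j\ne k$ in $[K]$: $u_{ji}\sim u_{ki}$, $b_{ji}\sim b_{ki}$, $b_{ji}\sim u_{ki}$. For $j\in[N]$ let $U^o_j=\{u_{ij}: i\in[K]\}$ and $B^o_j=\{b_{ij}:i\in[K]\}$. Then for every $i\in[N]$, the induced subgraph $G_{K,N}\big(U^o_i\cup\bigcup_{j\in[N]}B^o_j\big)$ is perfect.
   Context: A graph is perfect if in every induced subgraph the clique number equals the chromatic number. *)

(* Defs.v *)
From mathcomp Require Import all_boot.
Set Implicit Arguments. Unset Strict Implicit. Unset Printing Implicit Defensive.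

Section Graphs.
Variables (T : finType) (e : rel T).

Definition is_clique (S C : {set T}) : bool :=
  (C \subset S) && [forall x in C, forall y in C, (x != y) ==> e x y].

Definition clique_number (S : {set T}) : nat :=
  \max_(C : {set T} | is_clique S C) #|C|.

Definition proper_col (S : {set T}) m (f : {ffun T -> 'I_m}) : bool :=
  [forall x in S, forall y in S, e x y ==> (f x != f y)].

(* Colours are drawn from 'I_#|T| (enough for any colouring); only the
   values on S matter, so the empty induced subgraph is 0-colourable. *)
Definition colorable (S : {set T}) (k : nat) : bool :=
  [exists f : {ffun T -> 'I_#|T|}, proper_col S f && [forall x in S, f x < k]].

(* chromatic number of G[S]: least k such that G[S] is k-colourable
   (G[S] is always #|T|-colourable, so the bound #|T| is never reached
   by the default value). *)
Definition chromatic_number (S : {set T}) : nat :=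
  \big[minn/#|T|]_(k < #|T|.+1 | colorable S k) k.

Definition perfect (A : {set T}) : Prop :=
  forall S : {set T}, S \subset A -> clique_number S = chromatic_number S.

End Graphs.

(* vertex (true, i, j) is u_{ij}, (false, i, j) is b_{ij}; i : [K], j : [N] *)
Definition GKN_vertex (K N : nat) : finType := (bool * 'I_K * 'I_N)%type.

Definition is_u K N (x : GKN_vertex K N) : bool := x.1.1.
Definition is_b K N (x : GKN_vertex K N) : bool := ~~ x.1.1.
Definition rowi K N (x : GKN_vertex K N) : 'I_K := x.1.2.
Definition colj K N (x : GKN_vertex K N) : 'I_N := x.2.

Definition GKN_rule K N (x y : GKN_vertex K N) : bool :=
  [&& is_u x, is_u y, rowi x == rowi y & colj x != colj y]
  || [&& is_b x, is_u y & rowi x == rowi y]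
  || [&& is_u x, is_u y, colj x == colj y & rowi x != rowi y]
  || [&& is_b x, is_b y, colj x == colj y & rowi x != rowi y]
  || [&& is_b x, is_u y, colj x == colj y & rowi x != rowi y].

Definition GKN_adj K N : rel (GKN_vertex K N) :=
  fun x y => GKN_rule x y || GKN_rule y x.

Definition Uo K N (j : 'I_N) : {set GKN_vertex K N} :=
  [set x | is_u x && (colj x == j)].
Definition Bo K N (j : 'I_N) : {set GKN_vertex K N} :=
  [set x | is_b x && (colj x == j)].

(* Main.v *)
Require Import Defs.
From mathcomp Require Import all_boot.
Set Implicit Arguments. Unset Strict Implicit. Unset Printing Implicit Defensive.


Lemma exists_notin (m : nat) (L : seq nat) : size L < m -> exists2 k, k < m & k \notin L.
Proof.
move=> hs.
have [/allP hall|/allPn [k hk hn]] := boolP (all (fun k => k \in L) (iota 0 m)).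
  have := uniq_leq_size (iota_uniq 0 m) hall.
  by rewrite size_iota leqNgt hs.
by exists k => //; move: hk; rewrite mem_iota.
Qed.

Lemma injle (T : finType) (C : {set T}) (f : T -> nat) k :
  {in C &, injective f} -> (forall x, x \in C -> f x < k) -> #|C| <= k.
Proof.
move=> finj fb.
have u : uniq [seq f x | x <- enum C].
  by rewrite map_inj_in_uniq ?enum_uniq // => x y; rewrite !mem_enum; apply: finj.
have := uniq_leq_size u (s2 := iota 0 k).
rewrite size_map size_iota -cardE; apply => y /mapP [x]; rewrite mem_enum mem_iota => /fb.
by move=> h ->.
Qed.

Lemma colour_ext (T : finType) (U : eqType) (cls : T -> U) (F : pred T) (h : T -> nat) (m : nat)
  (X : {set T}) :
  (forall j, #|[set x in X | cls x == j]| <= m) ->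
  (forall x y, x \in X -> y \in X -> F x -> F y -> cls x = cls y -> h x = h y -> x = y) ->
  (forall x, x \in X -> F x -> 1 < m) ->
  exists g : T -> nat, [/\ forall x, x \in X -> g x < m,
      forall x y, x \in X -> y \in X -> cls x = cls y -> g x = g y -> x = y &
      forall x, x \in X -> F x -> g x != h x].
Proof.
move: {2}#|X| (leqnn #|X|) => n; elim: n X => [|n IH] X hX hcard hinj hm.
  have -> : X = set0 by apply/eqP; rewrite -cards_eq0 -leqn0.
  by exists (fun _ => 0); split => z; rewrite inE.
have [->|/set0Pn [x xX]] := eqVneq X set0.
  by exists (fun _ => 0); split => z; rewrite inE.
set X' := X :\ x.
have sX' : X' \subset X by apply: subsetDl.
have [|||| g' [gb ginj gav]] := IH X'.
- by rewrite -ltnS (leq_trans _ hX) // (cardsD1 x X) xX.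
- move=> j; apply: leq_trans (hcard j); apply: subset_leq_card; apply/subsetP => z.
  by rewrite !inE => /andP [/andP [_ ->] ->].
- by move=> a b aX bX; apply: hinj; apply: (subsetP sX').
- by move=> a aX; apply: hm; apply: (subsetP sX').
set Xc := [set z in X' | cls z == cls x].
set L0 := [seq g' z | z <- enum Xc].
have hL0 : forall z, z \in X' -> cls z = cls x -> g' z \in L0.
  by move=> z zX zc; apply: map_f; rewrite mem_enum inE zX zc eqxx.
have cXc : #|Xc|.+1 <= m.
  apply: leq_trans (hcard (cls x)).
  have -> : [set z in X | cls z == cls x] = x |: Xc.
    apply/setP => z; rewrite !inE; case: (eqVneq z x) => [->|]; by rewrite ?xX ?eqxx.
  by rewrite cardsU1 !inE eqxx.
have mpos : 0 < m by apply: leq_trans cXc.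
have direct : forall k, k < m -> k \notin L0 -> (F x -> k != h x) ->
   exists g : T -> nat, [/\ forall x, x \in X -> g x < m,
      forall x y, x \in X -> y \in X -> cls x = cls y -> g x = g y -> x = y &
      forall x, x \in X -> F x -> g x != h x].
  move=> k km kL kh.
  exists (fun z => if z == x then k else g' z); split.
  - move=> z zX; case: eqP => // /eqP zx; apply: gb; by rewrite !inE zx.
  - move=> a b aX bX.
    case: (eqVneq a x) => [->|ax]; case: (eqVneq b x) => [->|bx] //.
    + move=> ab e; move: kL; rewrite e hL0 //; by rewrite ?inE ?bx // ab.
    + move=> ab e; move: kL; rewrite -e hL0 //; by rewrite ?inE ?ax // -ab.
    + by apply: ginj; rewrite !inE ?ax ?bx.
  - move=> z zX; case: (eqVneq z x) => [->|zx] Fz; first exact: (kh Fz).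
    by apply: gav; rewrite ?inE ?zx.
have [k0 k0m k0L] : exists2 k, k < m & k \notin L0 by apply: exists_notin; rewrite size_map -cardE.
case hc: (F x && (k0 == h x)); last first.
  by apply: (direct k0) => // Fx; move: hc; rewrite Fx /= => ->.
move/andP: hc => [Fx /eqP k0h].
have [lt|ge] := ltnP #|Xc|.+1 m.
  have [k1 k1m] : exists2 k, k < m & k \notin h x :: L0 by apply: exists_notin; rewrite /= size_map -cardE.
  rewrite inE negb_or => /andP [k1h k1L].
  by apply: (direct k1) => // _; rewrite eq_sym.
have m2 := hm x xX Fx.
have /set0Pn [y yXc] : Xc != set0.
  by rewrite -cards_eq0; apply/negP => /eqP e; move: (leq_trans m2 ge); rewrite e.
move: (yXc); rewrite inE => /andP [yX' /eqP yc].
have yx : y != x by move: yX'; rewrite !inE => /andP [].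
have yX : y \in X by apply: (subsetP sX').
exists (fun z => if z == x then g' y else if z == y then k0 else g' z); split.
- move=> z zX; case: eqP => [_|/eqP zx]; first exact: gb.
  by case: eqP => // _; apply: gb; rewrite !inE zx.
- move=> a b aX bX.
  have gyL : g' y \in L0 by apply: hL0.
  case: (eqVneq a x) => [->|ax]; case: (eqVneq b x) => [->|bx] //.
  + move=> ab; case: (eqVneq b y) => [->|by'].
      by move=> e; move: k0L; rewrite -e gyL.
    move=> e; apply/eqP; rewrite eq_sym; apply/negP => _.
    have bX' : b \in X' by rewrite !inE bx.
    by move/eqP: by'; apply; apply: ginj => //; rewrite yc.
  + move=> ab; case: (eqVneq a y) => [->|ay].
      by move=> e; move: k0L; rewrite e gyL.
    move=> e; apply/eqP; apply/negP => _.
    have aX' : a \in X' by rewrite !inE ax.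
    by move/eqP: ay; apply; apply: ginj => //; rewrite yc.
  + have aX' : a \in X' by rewrite !inE ax.
    have bX' : b \in X' by rewrite !inE bx.
    case: (eqVneq a y) => [->|ay]; case: (eqVneq b y) => [->|by'] //.
    * by move=> ab e; move: k0L; rewrite e hL0 // -ab yc.
    * by move=> ab e; move: k0L; rewrite -e hL0 // ab yc.
    * by move=> ab; apply: ginj.
- move=> z zX; case: (eqVneq z x) => [->|zx] Fz.
    by rewrite -k0h; apply/eqP => e; move: k0L; rewrite -e hL0.
  case: (eqVneq z y) => [zy|zy]; last by apply: gav; rewrite ?inE ?zx.
  subst z; rewrite k0h; apply/eqP => e; move/eqP: yx; apply.
  by apply: hinj => //.
Qed.

Lemma memA K N (i : 'I_N) (x : GKN_vertex K N) :
  (x \in Uo K i :|: \bigcup_(j < N) Bo K j) = is_b x || (colj x == i).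
Proof.
rewrite inE; apply/idP/idP.
  case/orP; first by rewrite inE => /andP [_ ->]; rewrite orbT.
  by case/bigcupP => j _; rewrite inE => /andP [-> _].
case/orP => h.
  by apply/orP; right; apply/bigcupP; exists (colj x) => //; rewrite inE h eqxx.
case hb: (is_b x); first by apply/orP; right; apply/bigcupP; exists (colj x) => //; rewrite inE hb eqxx.
by apply/orP; left; rewrite inE h andbT; move: hb; rewrite /is_b /is_u; case: (x.1.1).
Qed.

Ltac crush := repeat (match goal with |- context[?a == ?b] =>
   case: (eqVneq a b) => [?|?]; [subst=> //= | rewrite //=] end).

Lemma adjA K N (i : 'I_N) (x y : GKN_vertex K N) :
  is_b x || (colj x == i) -> is_b y || (colj y == i) ->
  GKN_adj x y = (x != y) && ((colj x == colj y) || ((is_u x != is_u y) && (rowi x == rowi y))).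
Proof.
case: x => [[bx rx] cx]; case: y => [[by_ ry] cy].
rewrite /GKN_adj /GKN_rule /is_b /is_u /rowi /colj /= !xpair_eqE.
by case: bx; case: by_ => /=; crush.
Qed.

Lemma cliqueP (T : finType) (e : rel T) (S C : {set T}) :
  C \subset S -> (forall x y, x \in C -> y \in C -> x != y -> e x y) -> is_clique e S C.
Proof.
move=> sub h; rewrite /is_clique sub /=; apply/forallP => x; apply/implyP => xC.
apply/forallP => y; apply/implyP => yC; apply/implyP; exact: h.
Qed.

Lemma cliqueE (T : finType) (e : rel T) (S C : {set T}) x y :
  is_clique e S C -> x \in C -> y \in C -> x != y -> e x y.
Proof.
case/andP => _ /forallP h xC yC; move: (h x); rewrite xC /= => /forallP /(_ y).
by rewrite yC /= => /implyP.
Qed.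

Lemma bigmin_le (I : eqType) (r : seq I) (P : pred I) (F : I -> nat) n j :
  j \in r -> P j -> \big[minn/n]_(i <- r | P i) F i <= F j.
Proof.
elim: r => // x r IH; rewrite inE big_cons => /orP [/eqP <-|jr] Pj.
  by rewrite Pj geq_minl.
case: (P x); last exact: IH.
by rewrite geq_min IH ?orbT.
Qed.

Lemma chrom_eq (T : finType) (e : rel T) (S : {set T}) m :
  m <= #|T| -> colorable e S m -> (forall k, colorable e S k -> m <= k) ->
  chromatic_number e S = m.
Proof.
move=> mT cm hk; rewrite /chromatic_number.
have mn : m < #|T|.+1 by [].
apply/eqP; rewrite eqn_leq; apply/andP; split.
  have := @bigmin_le _ (index_enum 'I_#|T|.+1) (fun k : 'I_#|T|.+1 => colorable e S k)
     (fun k : 'I_#|T|.+1 => val k) #|T| (inord m).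
  rewrite mem_index_enum => /(_ isT) h; have := h ltac:(by rewrite inordK); move=> hh; apply: (leq_trans hh); by rewrite /= inordK.
by apply: (big_ind (fun v => m <= v)) => // [a b ha hb|j hj]; [rewrite leq_min ha | exact: hk].
Qed.

Theorem lemma6 (K N : nat) (i : 'I_N) :
  perfect (@GKN_adj K N) (Uo K i :|: \bigcup_(j < N) Bo K j).
Proof.
move=> S SA.
set e := @GKN_adj K N.
have inA : forall x, x \in S -> is_b x || (colj x == i).
  by move=> x xS; rewrite -(memA i) (subsetP SA).
set m := clique_number e S.
have hcl : forall C, is_clique e S C -> #|C| <= m.
  by move=> C hC; rewrite /m /clique_number; exact: (leq_bigmax_cond (P := fun C => is_clique e S C)).
have [C0 C0cl C0m] : exists2 C0, is_clique e S C0 & m = #|C0|.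
  have ne : 0 < #|(fun C => is_clique e S C) : pred {set GKN_vertex K N}|.
    apply/card_gt0P; exists set0; rewrite /in_mem /=; apply: cliqueP; first exact: sub0set.
    by move=> x y; rewrite inE.
  have [C0 h1 h2] := eq_bigmax_cond (fun C : {set GKN_vertex K N} => #|C|) ne.
  by exists C0 => //; rewrite /m /clique_number; exact: h2.
have mT : m <= #|GKN_vertex K N| by rewrite C0m max_card.
have hcol : forall j, #|[set x in S | colj x == j]| <= m.
  move=> j; apply: hcl; apply: cliqueP; first by apply/subsetP => x; rewrite inE => /andP [].
  move=> x y; rewrite !inE => /andP [xS /eqP xj] /andP [yS /eqP yj] xy.
  by rewrite /e (adjA (inA _ xS) (inA _ yS)) xy xj yj eqxx.
have hedge : forall x y, x \in S -> y \in S -> e x y -> 1 < m.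
  move=> x y xS yS exy; have xy : x != y.
    by move: exy; rewrite /e (adjA (inA _ xS) (inA _ yS)) => /andP [].
  have := hcl [set x; y]; rewrite cards2 xy; apply; apply: cliqueP.
    by apply/subsetP => z; rewrite !inE => /orP [] /eqP ->.
  move=> a b; rewrite !inE => /orP [] /eqP -> /orP [] /eqP -> //; rewrite ?eqxx //.
  by move=> _; rewrite /e /GKN_adj orbC; exact: exy.
pose uo (x : GKN_vertex K N) : GKN_vertex K N := (true, rowi x, i).
have [g0 [g0b g0inj _]] := @colour_ext _ _ (@colj K N) pred0 (fun _ => 0) m S hcol
   (fun x y _ _ f => False_ind _ (notF f)) (fun x _ f => False_ind _ (notF f)).
set X2 := [set x in S | colj x != i].
have X2S : X2 \subset S by apply/subsetP => x; rewrite inE => /andP [].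
have X2b : forall x, x \in X2 -> x = (false, rowi x, colj x).
  move=> x; rewrite inE => /andP [/inA]; case: x => [[[] r] c] //=.
  by move=> -> .
have [|||g2 [g2b g2inj g2av]] := @colour_ext _ _ (@colj K N) (fun x => uo x \in S)
   (fun x => g0 (uo x)) m X2.
- move=> j; apply: leq_trans (hcol j); apply: subset_leq_card; apply/subsetP => x.
  by rewrite !inE => /andP [/andP [-> _] ->].
- move=> x y xX yX Fx Fy cxy g0e.
  have := g0inj _ _ Fx Fy erefl g0e => /(congr1 (@rowi K N)); rewrite /uo /rowi /= => rxy.
  by rewrite (X2b _ xX) (X2b _ yX) /rowi rxy cxy.
- move=> x xX Fx; apply: (hedge x (uo x)) => //; first exact: (subsetP X2S x xX).
  rewrite /e (adjA (inA _ (subsetP X2S _ xX)) (inA _ Fx)) (X2b _ xX) /=.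
  by rewrite /is_u /rowi /= eqxx !orbT.
pose G x := if colj x == i then g0 x else g2 x.
have Gb : forall x, x \in S -> G x < m.
  move=> x xS; rewrite /G; case: ifP => xi; first exact: g0b.
  by apply: g2b; rewrite inE xS xi.
have same : forall x y, x \in S -> y \in S -> x != y -> colj x = colj y -> G x != G y.
  move=> x y xS yS xy cxy; rewrite /G cxy; case: ifP => yi.
    by apply/eqP => h; move/eqP: xy; apply; apply: g0inj.
  apply/eqP => h; move/eqP: xy; apply; apply: g2inj => //; by rewrite inE ?xS ?yS ?cxy yi.
have cross : forall a b, a \in S -> b \in S -> colj a == i -> colj b != i -> is_u a != is_u b ->
    rowi a == rowi b -> G a != G b.
  move=> a b aS bS ai bi uab rab.
  have bX : b \in X2 by rewrite inE bS bi.
  have ub : is_u b = false by rewrite (X2b _ bX).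
  have ea : uo b = a.
    move: uab rab ai; rewrite ub /uo; case: (a) => [[[] r] c] //=.
    by rewrite /is_u /rowi /colj /= => _ /eqP -> /eqP ->.
  rewrite /G ai (negbTE bi); have := g2av b bX; rewrite ea => /(_ aS).
  by rewrite eq_sym.
have proper : forall x y, x \in S -> y \in S -> e x y -> G x != G y.
  move=> x y xS yS; rewrite /e (adjA (inA _ xS) (inA _ yS)) => /andP [xy /orP [/eqP cxy|/andP [uxy rxy]]].
    exact: same.
  have [cxy|cxy] := eqVneq (colj x) (colj y); first exact: same.
  have [xi|xi] := eqVneq (colj x) i.
    by apply: cross => //; [rewrite xi | rewrite -xi; apply: contra_neq cxy => ->].
  have yi : colj y == i.
    move: (inA _ xS) (inA _ yS) uxy; rewrite (negbTE xi) orbF /is_b /is_u.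
    by case: (x.1.1); case: (y.1.1) => //= _ ->.
  by rewrite eq_sym; apply: cross => //; rewrite eq_sym.
have C0S : C0 \subset S by case/andP: C0cl.
symmetry; apply: chrom_eq => //.
  pose f := [ffun x => insubd (enum_rank x) (G x)].
  have vf : forall x, x \in S -> val (f x) = G x.
    by move=> x xS; rewrite ffunE val_insubd (leq_trans (Gb x xS) mT).
  apply/existsP; exists f; apply/andP; split.
    apply/forallP => x; apply/implyP => xS; apply/forallP => y; apply/implyP => yS.
    apply/implyP => exy; apply: contra_neq (proper _ _ xS yS exy) => h.
    by rewrite -(vf x xS) -(vf y yS) h.
  by apply/forallP => x; apply/implyP => xS; rewrite vf // Gb.
move=> k /existsP [f /andP [pf /forallP fb]].
rewrite C0m; apply: (@injle _ C0 (fun x => val (f x))).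
  move=> x y xC yC /val_inj h; apply/eqP; apply/negPn/negP => xy.
  have exy := cliqueE C0cl xC yC xy.
  move: pf => /forallP /(_ x); rewrite (subsetP C0S _ xC) /= => /forallP /(_ y).
  by rewrite (subsetP C0S _ yC) /= exy h eqxx.
by move=> x xC; have := fb x; rewrite (subsetP C0S _ xC).
Qed.
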